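(* Let $k\ge1$, $G=(V,E)$ an inductively $k$-independent graph with $k$-independence ordering $v_1,\dots,v_n$, $f:2^V\to\mathbb{R}_{\ge0}$ monotone submodular with $f(\emptyset)=0$, and $\beta>0$. The algorithm PREEMPTIVE-GREEDY (described in the context) with parameter $\beta$ returns an independent set $S_{\mathrm{out}}$ of $G$ such that for every independent set $T$ of $G$, \[ f(T)\le\big(k(1+\beta)+1\big)\big(1+\beta^{-1}\big)\,f(S_{\mathrm{out}}). \]
   Context: $N(v)$ is the neighbourhood of $v$ (excluding $v$); $G$ is inductively $k$-independent with $k$-independence ordering $v_1,\dots,v_n$ if for every $i$, $G[N(v_i)\cap\{v_i,\dots,v_n\}]$ has no independent set of size more than $k$. Order $V$ by $v_1<v_2<\dots<v_n$. For $S\subseteq V$ and $v\in V$, $f_S(v)=f(S\cup\{v\})-f(S)$, and the incremental value of $u$ in $S$ is $\nu_f(S,u)=f_{S'}(u)$ where $S'=\{s\in S:s<u\}$. Algorithm PREEMPTIVE-GREEDY (parameter $\beta>0$): start with $S=\emptyset$; for $i=1,\dots,n$: let $C_i=N(v_i)\cap S$; if $f_S(v_i)\ge(1+\beta)\sum_{u\in C_i}\nu_f(S,u)$, replace $S$ by $(S\setminus C_i)\cup\{v_i\}$. Return the final $S$ as $S_{\mathrm{out}}$. *)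

(* Defs.v *)
(* Vertices are 'I_n; the ordering v_1 < ... < v_n is the
   natural order on 'I_n. A simple graph is a symmetric irreflexive rel. *)
From mathcomp Require Import all_boot all_order all_algebra.
Set Implicit Arguments. Unset Strict Implicit. Unset Printing Implicit Defensive.
Import Order.TTheory GRing.Theory Num.Theory.
Local Open Scope ring_scope.

Section Defs.
Variable n : nat.
Variable e : rel 'I_n.

Definition simple_graph : Prop := symmetric e /\ irreflexive e.

Definition nbhd (v : 'I_n) : {set 'I_n} := [set u | e v u].

Definition independent (S : {set 'I_n}) : Prop :=
  forall u v, u \in S -> v \in S -> ~~ e u v.

Definition inductively_k_independent (k : nat) : Prop :=
  forall (i : 'I_n) (I : {set 'I_n}),
    I \subset nbhd i :&: [set j : 'I_n | (i <= j)%N] -> independent I -> (#|I| <= k)%N.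

Variable R : realFieldType.
Variable f : {set 'I_n} -> R.

Definition monotone_fn : Prop := forall A B : {set 'I_n}, A \subset B -> f A <= f B.
Definition submodular_fn : Prop :=
  forall A B : {set 'I_n}, f (A :|: B) + f (A :&: B) <= f A + f B.
Definition nonneg_fn : Prop := forall A, 0 <= f A.

Definition marg (S : {set 'I_n}) (v : 'I_n) : R := f (v |: S) - f S.

Definition incr_value (S : {set 'I_n}) (u : 'I_n) : R :=
  marg [set s in S | (s < u)%N] u.

Variable beta : R.

Definition pg_step (S : {set 'I_n}) (v : 'I_n) : {set 'I_n} :=
  let C := nbhd v :&: S in
  if marg S v >= (1 + beta) * \sum_(u in C) incr_value S u
  then (S :\: C) :|: [set v] else S.

Definition preemptive_greedy : {set 'I_n} := foldl pg_step set0 (enum 'I_n).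

End Defs.

(* Main.v *)
Require Import Defs.
From mathcomp Require Import all_boot all_order all_algebra.
From mathcomp Require Import ring lra.
Import Order.TTheory GRing.Theory Num.Theory.
Local Open Scope ring_scope.

Section PG.
Variables (n k : nat) (e : rel 'I_n) (R : realFieldType) (f : {set 'I_n} -> R) (beta : R) (T : {set 'I_n}).
Hypotheses (Hsym : symmetric e) (Hirr : irreflexive e) (Hind : inductively_k_independent e k)
  (Hmono : monotone_fn f) (Hsub : submodular_fn f) (Hf0 : f set0 = 0) (Hb : 0 < beta)
  (HT : independent e T).

Lemma mg_ge0 (S : {set 'I_n}) v : 0 <= marg f S v.
Proof. by rewrite /marg subr_ge0; apply: Hmono; exact: subsetUr. Qed.

Lemma nu_ge0 (S : {set 'I_n}) u : 0 <= incr_value f S u.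
Proof. exact: mg_ge0. Qed.

Lemma dimin (A B : {set 'I_n}) x : A \subset B -> marg f B x <= marg f A x.
Proof.
move=> AB; rewrite /marg; case: (boolP (x \in B)) => xB.
  have -> : x |: B = B by apply/setP => y; rewrite !inE; case: eqVneq => // ->.
  by rewrite subrr; apply: mg_ge0.
have := Hsub (x |: A) B.
have -> : (x |: A) :|: B = x |: B.
  apply/setP => y; rewrite !inE; case: (y == x) => //=.
  by rewrite orb_idl // => /(subsetP AB).
have -> : (x |: A) :&: B = A.
  apply/setP => y; rewrite !inE; case: eqVneq => [->|_] /=.
    by rewrite (negbTE xB); apply/esym/negbTE/negP => /(subsetP AB); rewrite (negbTE xB).
  by rewrite andb_idr // => /(subsetP AB).
move=> H; lra.
Qed.

Definition Phi (S : {set 'I_n}) := \sum_(u in S) incr_value f S u.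
Definition Tset m (u : 'I_n) := [set t in T | [&& (u < t)%N, (t < m)%N & e u t]].
Definition Pot (S : {set 'I_n}) m := \sum_(u in S) (#|Tset m u|)%:R * incr_value f S u.
Definition Tm m := [set t in T | (t < m)%N].

Lemma Tset_k m (u : 'I_n) : (#|Tset m u| <= k)%N.
Proof.
apply: (Hind u).
  apply/subsetP => t; rewrite !inE => /and4P[_ ut _ eut].
  by rewrite eut ltnW.
move=> x y; rewrite !inE => /andP[xT _] /andP[yT _]; exact: HT.
Qed.

Lemma Tset_mono m (u : 'I_n) : (#|Tset m u| <= #|Tset m.+1 u|)%N.
Proof.
apply: subset_leq_card; apply/subsetP => t; rewrite !inE => /and4P[-> -> tm ->].
by rewrite ltnW.
Qed.

Lemma Tset_incr (v u : 'I_n) : v \in T -> (u < v)%N -> e u v ->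
  (#|Tset v u|.+1 <= #|Tset v.+1 u|)%N.
Proof.
move=> vT uv euv.
have -> : #|Tset v u|.+1 = #|v |: Tset v u| by rewrite cardsU1 inE ltnn !andbF.
apply: subset_leq_card; apply/subsetP => t; rewrite !inE.
case: eqVneq => [->|_] /=; first by rewrite vT uv euv ltnSn.
by move=> /and4P[-> -> tm ->]; rewrite ltnW.
Qed.


Lemma ltS_ord (s v : 'I_n) : (s < v.+1)%N = (s == v) || (s < v)%N.
Proof. by rewrite ltnS leq_eqVlt. Qed.

Lemma step (S A : {set 'I_n}) (R0 : R) (v : 'I_n) :
  S \subset [set u : 'I_n | (u < v)%N] -> S \subset A -> independent e S -> 0 <= R0 ->
  beta * R0 <= Phi S -> f A <= Phi S + R0 ->
  f (Tm v :|: A) <= f A + (1 + beta) * (Pot S v + k%:R * R0) ->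
  exists (A' : {set 'I_n}) (R' : R), let S' := pg_step e f beta S v in
  [/\ S' \subset [set u : 'I_n | (u < v.+1)%N], S' \subset A', independent e S', 0 <= R' &
   [/\ beta * R' <= Phi S', f A' <= Phi S' + R' &
   f (Tm v.+1 :|: A') <= f A' + (1 + beta) * (Pot S' v.+1 + k%:R * R')]].
Proof.
move=> HSv HSA HiS HR0 HbR HfA HfT.
have vS : v \notin S by apply/negP => /(subsetP HSv); rewrite inE ltnn.
set C := nbhd e v :&: S.
have CS : C \subset S := subsetIr _ _.
have SC : S :&: C = C by apply/setIidPr.
have PhiS : Phi S = \sum_(u in C) incr_value f S u + \sum_(u in S :\: C) incr_value f S u.
  by rewrite /Phi (big_setID C) /= SC.
have PotS m : Pot S m = \sum_(u in C) (#|Tset m u|)%:R * incr_value f S u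
     + \sum_(u in S :\: C) (#|Tset m u|)%:R * incr_value f S u.
  by rewrite /Pot (big_setID C) /= SC.
have nuC0 : 0 <= \sum_(u in C) incr_value f S u by apply: sumr_ge0 => u _; apply: nu_ge0.
have fins (X : {set 'I_n}) : f (v |: X) = f X + marg f X v by rewrite /marg; ring.
rewrite /pg_step -/C; case: ifP => Hacc.
- set S' := (S :\: C) :|: [set v].
  exists (v |: A), (R0 + \sum_(u in C) incr_value f S u).
  have S'E : S' = v |: (S :\: C) by rewrite /S' setUC.
  have vSC : v \notin S :\: C by rewrite inE (negbTE vS) andbF.
  have inS' s : (s \in S') = (s == v) || (s \in S :\: C) by rewrite S'E in_setU1.
  clearbody S'.
  have pre_v : [set s in S' | (s < v)%N] = S :\: C.
    apply/setP => s; rewrite inE inS'; case: eqVneq => [->|sv] /=.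
      by rewrite ltnn (negbTE vSC).
    apply/andP/idP => [[]//|H]; split => //.
    by move: H; rewrite inE => /andP[_ /(subsetP HSv)]; rewrite inE.
  have nuv : incr_value f S' v = marg f (S :\: C) v by rewrite /incr_value pre_v.
  have nuSC u : u \in S :\: C -> incr_value f S u <= incr_value f S' u.
    move=> uSC; rewrite /incr_value; apply: dimin; apply/subsetP => s.
    rewrite !inE inS' => /andP[/orP[/eqP->|]]; last by rewrite inE => /andP[_ ->] ->.
    move: uSC; rewrite inE => /andP[_ /(subsetP HSv)]; rewrite inE => uv vu.
    by have := ltn_trans uv vu; rewrite ltnn.
  have PhiS' : Phi S' = incr_value f S' v + \sum_(u in S :\: C) incr_value f S' u.
    by rewrite /Phi S'E big_setU1.
  have PotS' m : Pot S' m = (#|Tset m v|)%:R * incr_value f S' v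
     + \sum_(u in S :\: C) (#|Tset m u|)%:R * incr_value f S' u.
    by rewrite /Pot S'E big_setU1.
  have sumle : \sum_(u in S :\: C) incr_value f S u <= \sum_(u in S :\: C) incr_value f S' u.
    by apply: ler_sum => u /nuSC.
  have mgle : marg f S v <= marg f (S :\: C) v by apply: dimin; exact: subsetDl.
  have mgA : marg f A v <= marg f (S :\: C) v.
    by apply: dimin; apply: subset_trans HSA; exact: subsetDl.
  split; last split.
  + apply/subsetP => s; rewrite inS' !inE; case: eqVneq => [->|_] /=; first by rewrite ltnSn.
    by move=> /andP[_ /(subsetP HSv)]; rewrite inE => /ltnW.
  + rewrite S'E; apply: setUS; apply: subset_trans HSA; exact: subsetDl.
  + move=> x y; rewrite !inS' => /orP[/eqP->|xS] /orP[/eqP->|yS].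
    * by rewrite Hirr.
    * by move: yS; rewrite /C !inE; case: (e v y) => //=; case: (y \in S).
    * by rewrite Hsym; move: xS; rewrite /C !inE; case: (e v x) => //=; case: (x \in S).
    * by apply: HiS; [move: xS | move: yS]; rewrite !inE => /andP[].
  + by apply: addr_ge0.
  + rewrite PhiS' nuv; move: Hacc => /idP Hacc; lra.
  + rewrite fins PhiS' nuv; lra.
  + have -> : Tm v.+1 :|: (v |: A) = v |: (Tm v :|: A).
      apply/setP => s; rewrite !inE ltnS leq_eqVlt -[s == v]val_eqE /=.
      by case: (s == v :> nat); rewrite ?andbT ?orbT.
    rewrite fins.
    have mX : marg f (Tm v :|: A) v <= marg f A v by apply: dimin; exact: subsetUr.
    have PotLe : Pot S v <= Pot S' v.+1 + k%:R * \sum_(u in C) incr_value f S u.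
      rewrite PotS PotS' mulr_sumr.
      have h1 : \sum_(u in C) (#|Tset v u|)%:R * incr_value f S u
             <= \sum_(u in C) k%:R * incr_value f S u.
        by apply: ler_sum => u _; apply: ler_wpM2r; [exact: nu_ge0 | rewrite ler_nat Tset_k].
      have h2 : \sum_(u in S :\: C) (#|Tset v u|)%:R * incr_value f S u
             <= \sum_(u in S :\: C) (#|Tset v.+1 u|)%:R * incr_value f S' u.
        apply: ler_sum => u uSC; apply: ler_pM => //; first exact: nu_ge0.
          by rewrite ler_nat Tset_mono.
        exact: nuSC.
      have h3 : 0 <= (#|Tset v.+1 v|)%:R * incr_value f S' v by apply: mulr_ge0 => //; exact: nu_ge0.
      lra.
    have hb : 0 <= 1 + beta by rewrite addr_ge0 // ltW.
    have := ler_wpM2l hb PotLe; rewrite fins in HfT *; lra.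
- exists A, R0.
  have Hlt : marg f S v < (1 + beta) * \sum_(u in C) incr_value f S u by rewrite ltNge Hacc.
  (split; last split) => //.
  + apply: subset_trans HSv _; apply/subsetP => s; rewrite !inE; exact: ltnW.
  + have PotM : Pot S v <= Pot S v.+1.
      apply: ler_sum => u _; apply: ler_wpM2r; [exact: nu_ge0 | by rewrite ler_nat Tset_mono].
    case vT: (v \in T); last first.
      have -> : Tm v.+1 = Tm v.
        apply/setP => s; rewrite !inE ltS_ord; case: eqVneq => [->|] //=.
        by rewrite vT ltnn.
      have hb : 0 <= 1 + beta by rewrite addr_ge0 // ltW.
      have := ler_wpM2l hb PotM; lra.
    have -> : Tm v.+1 :|: A = v |: (Tm v :|: A).
      apply/setP => s; rewrite !inE ltS_ord; case: eqVneq => [->|] //=.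
      by rewrite vT.
    rewrite fins.
    have mX : marg f (Tm v :|: A) v <= marg f S v.
      by apply: dimin; apply: subset_trans HSA _; exact: subsetUr.
    have PotI : Pot S v + \sum_(u in C) incr_value f S u <= Pot S v.+1.
      rewrite !PotS addrAC -big_split /=.
      have h1 : \sum_(u in C) ((#|Tset v u|)%:R * incr_value f S u + incr_value f S u)
             <= \sum_(u in C) (#|Tset v.+1 u|)%:R * incr_value f S u.
        apply: ler_sum => u uC.
        have uv : (u < v)%N by have := subsetP HSv u (subsetP CS u uC); rewrite inE.
        have euv : e u v by move: uC; rewrite !inE Hsym => /andP[].
        have := Tset_incr _ _ vT uv euv; rewrite -(ler_nat R) -natr1 => hn.
        have := ler_wpM2r (nu_ge0 S u) hn; lra.
      have h2 : \sum_(u in S :\: C) (#|Tset v u|)%:R * incr_value f S u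
             <= \sum_(u in S :\: C) (#|Tset v.+1 u|)%:R * incr_value f S u.
        apply: ler_sum => u _; apply: ler_wpM2r; [exact: nu_ge0 | by rewrite ler_nat Tset_mono].
      lra.
    have hb : 0 <= 1 + beta by rewrite addr_ge0 // ltW.
    have := ler_wpM2l hb PotI; lra.
Qed.

Definition Sm m := foldl (pg_step e f beta) set0 (take m (enum 'I_n)).

Lemma inv m : (m <= n)%N -> exists (A : {set 'I_n}) (R0 : R),
  [/\ Sm m \subset [set u : 'I_n | (u < m)%N], Sm m \subset A, independent e (Sm m), 0 <= R0 &
   [/\ beta * R0 <= Phi (Sm m), f A <= Phi (Sm m) + R0 &
   f (Tm m :|: A) <= f A + (1 + beta) * (Pot (Sm m) m + k%:R * R0)]].
Proof.
elim: m => [|m IH] Hm.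
  have S0 : Sm 0 = set0 by rewrite /Sm take0.
  have T0 : Tm 0 = set0 by apply/setP => s; rewrite !inE ltn0 andbF.
  exists set0, 0; rewrite S0 T0 setU0 /Phi /Pot !big_set0 Hf0 mulr0 !addr0 mulr0.
  (split; last split) => //; try exact: sub0set.
    by move=> x y; rewrite in_set0.
  by rewrite !(addr0, mulr0).
have [A [R0 [H1 H2 H3 H4 [H5 H6 H7]]]] := IH (ltnW Hm).
pose v := Ordinal Hm.
have -> : Sm m.+1 = pg_step e f beta (Sm m) v.
  rewrite /Sm (take_nth v) ?size_enum_ord // foldl_rcons; congr pg_step.
  exact: (nth_ord_enum v v).
exact: (step _ _ _ v H1 H2 H3 H4 H5 H6 H7).
Qed.

Lemma tele (S : {set 'I_n}) m :
  \sum_(u in S | (u < m)%N) incr_value f S u = f [set u in S | (u < m)%N].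
Proof.
elim: m => [|m IH].
  rewrite big_pred0 => [|u]; last by rewrite ltn0 andbF.
  have -> : [set u in S | (u < 0)%N] = set0 by apply/setP => u; rewrite !inE ltn0 andbF.
  by rewrite Hf0.
case: (ltnP m n) => Hm; last first.
  rewrite (eq_bigl (fun u => (u \in S) && (u < m)%N)); last first.
    by move=> u; rewrite (leq_trans (ltn_ord u) Hm) (ltn_trans (leq_trans (ltn_ord u) Hm)).
  rewrite IH; congr f; apply/setP => u; rewrite !inE.
  by rewrite (leq_trans (ltn_ord u) Hm) (ltn_trans (leq_trans (ltn_ord u) Hm)).
pose o := Ordinal Hm.
have ltSo (u : 'I_n) : (u < m.+1)%N = (u == o) || (u < m)%N by rewrite ltnS leq_eqVlt.
case: (boolP (o \in S)) => oS.
  rewrite (bigD1 o) /=; last by rewrite oS ltnSn.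
  rewrite (eq_bigl (fun u => (u \in S) && (u < m)%N)); last first.
    move=> u; rewrite ltSo; case: eqVneq => [->|] /=; first by rewrite andbF (ltnn m) andbF.
    by rewrite andbT.
  rewrite IH /incr_value /marg.
  have -> : [set s in S | (s < o)%N] = [set u in S | (u < m)%N] by [].
  have -> : [set u in S | (u < m.+1)%N] = o |: [set u in S | (u < m)%N].
    apply/setP => u; rewrite !inE ltSo; case: eqVneq => [->|] //=.
    by rewrite oS.
  by rewrite subrK.
rewrite (eq_bigl (fun u => (u \in S) && (u < m)%N)); last first.
  move=> u; rewrite ltSo; case: eqVneq => [->|] //=.
  by rewrite (negbTE oS).
rewrite IH; congr f; apply/setP => u; rewrite !inE ltSo; case: eqVneq => [->|] //=.
by rewrite (negbTE oS).
Qed.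

Lemma Phi_f (S : {set 'I_n}) : Phi S = f S.
Proof.
have := tele S n.
rewrite (eq_bigl (fun u => u \in S)); last by move=> u; rewrite ltn_ord andbT.
rewrite /Phi => ->; congr f; apply/setP => u; rewrite !inE ltn_ord andbT //.
Qed.

Lemma SmE : Sm n = preemptive_greedy e f beta.
Proof. by rewrite /Sm -[X in take X _](size_enum_ord n) take_size. Qed.

Lemma main_indep : independent e (preemptive_greedy e f beta).
Proof. by have [A [R0 [_ _ H _ _]]] := inv n (leqnn n); rewrite -SmE. Qed.

Lemma main_bound :
  f T <= ((k%:R * (1 + beta) + 1) * (1 + beta^-1)) * f (preemptive_greedy e f beta).
Proof.
have [A [R0 [_ _ _ HR0 [HbR HfA HfT]]]] := inv n (leqnn n).
rewrite -SmE -(Phi_f (Sm n)).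
have TmE : Tm n = T by apply/setP => u; rewrite inE ltn_ord andbT.
rewrite TmE in HfT.
set P := Phi (Sm n) in HbR HfA HfT *.
have HT1 : f T <= f (T :|: A) by apply: Hmono; exact: subsetUl.
have HPot : Pot (Sm n) n <= k%:R * P.
  rewrite /Pot /P /Phi mulr_sumr; apply: ler_sum => u _.
  by apply: ler_wpM2r; [exact: nu_ge0 | rewrite ler_nat Tset_k].
have hb : 0 <= 1 + beta by rewrite addr_ge0 // ltW.
have h1 := ler_wpM2l hb HPot.
have HR : R0 <= P / beta by rewrite ler_pdivlMr // mulrC.
have K0 : 0 <= k%:R * (1 + beta) + 1 by rewrite addr_ge0 // mulr_ge0.
have h2 := ler_wpM2l K0 (lerD (lexx P) HR).
have -> : (k%:R * (1 + beta) + 1) * (1 + beta^-1) * P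
        = (k%:R * (1 + beta) + 1) * (P + P / beta) by ring.
lra.
Qed.

End PG.

Theorem theorem6 (R : realFieldType) (n k : nat) (e : rel 'I_n)
  (f : {set 'I_n} -> R) (beta : R) :
  (1 <= k)%N ->
  simple_graph e ->
  inductively_k_independent e k ->
  nonneg_fn f -> monotone_fn f -> submodular_fn f -> f set0 = 0 ->
  0 < beta ->
  independent e (preemptive_greedy e f beta) /\
  forall T : {set 'I_n}, independent e T ->
    f T <= ((k%:R * (1 + beta) + 1) * (1 + beta^-1)) * f (preemptive_greedy e f beta).
Proof.
move=> _ [Hsym Hirr] Hind _ Hmono Hsub Hf0 Hb; split.
  apply: (@main_indep n k e R f beta set0) => //.
  by move=> x y; rewrite in_set0.
move=> T HT; exact: (@main_bound n k e R f beta T).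
Qed.
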